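(* Let $X$ be a complete separable metric space, $\Sigma$ a compact Hausdorff group with Haar probability measure $\mu_\Sigma$ acting measurably on $X$ via $T_\sigma$, and $\Gamma\subset C_b(X)$. 1. If $\Gamma$ is admissible then $\Gamma^{\mathrm{inv}}_\Sigma$ is admissible. 2. If $\Gamma$ is strictly admissible and $S_\Sigma[\Gamma]\subset\Gamma$ then $\Gamma^{\mathrm{inv}}_\Sigma$ is $\Sigma$-strictly admissible.
   Context: $C_b(X)$: bounded continuous functions. $S_\Sigma[\gamma](x)=\int_\Sigma\gamma(T_\sigma(x))\mu_\Sigma(d\sigma)$; $\Gamma^{\mathrm{inv}}_\Sigma=\{\gamma\in\Gamma:\gamma\circ T_\sigma=\gamma\ \forall\sigma\}$; $\mathcal{P}_\Sigma(X)$ is the set of probability measures $P$ with $P\circ T_\sigma^{-1}=P$ for all $\sigma$. For $\mathcal{Q}\subset\mathcal{P}(X)$, a set $\Psi\subset\mathcal{M}_b(X)$ is $\mathcal{Q}$-determining if for $Q,P\in\mathcal{Q}$, $E_Q[\psi]=E_P[\psi]$ for all $\psi\in\Psi$ implies $Q=P$. The $M(X)$-topology on $C_b(X)$ is the weakest topology making $\gamma\mapsto\int\gamma d\nu$ continuous for every finite signed measure $\nu$. $\Gamma\subset C_b(X)$ is admissible if $0\in\Gamma$, $\Gamma$ is convex, and $\Gamma$ is closed in the $M(X)$-topology; strictly admissible if moreover there is a $\mathcal{P}(X)$-determining $\Psi\subset C_b(X)$ such that for each $\psi\in\Psi$ there are $c\in\mathbb{R}$, $\epsilon>0$ with $c\pm\epsilon\psi\in\Gamma$.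 An admissible $\Gamma\subset C_b(X)$ consisting of $\Sigma$-invariant functions is $\Sigma$-strictly admissible if there is a $\mathcal{P}_\Sigma(X)$-determining $\Psi\subset C_b(X)$ such that for each $\psi\in\Psi$ there are $c\in\mathbb{R}$, $\epsilon>0$ with $c\pm\epsilon\psi\in\Gamma$. *)

(* Defs.v *)
From HB Require Import structures.
From mathcomp Require Import all_boot all_order all_algebra.
From mathcomp Require Import all_classical all_reals all_analysis.
Set Implicit Arguments. Unset Strict Implicit. Unset Printing Implicit Defensive.
Import Order.TTheory GRing.Theory Num.Theory.
Local Open Scope classical_set_scope.
Local Open Scope ring_scope.

Definition borel (T : ptopologicalType) := g_sigma_algebraType (@open T).

Section Defs.
Context {R : realType}.

Definition separable_space (T : topologicalType) :=
  exists D : set T, countable D /\ closure D = setT.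

Definition Cb (X : topologicalType) : set (X -> R) :=
  [set f | continuous f /\ exists M : R, forall x, `|f x| <= M].
Arguments Cb X : clear implicits.

Section OnX.
Variable X : ptopologicalType.

(* Integral of g against the finite signed measure nu = mp - mn
   (every finite signed measure is of this form, by Jordan decomposition). *)
Definition sint (mp mn : {finite_measure set (borel X) -> \bar R}) (g : X -> R) : R :=
  fine (\int[mp]_x (g x)%:E)%E - fine (\int[mn]_x (g x)%:E)%E.

(* Gam is closed in C_b(X) for the M(X)-topology, i.e. the weakest topology
   making g |-> \int g dnu continuous for every finite signed measure nu.
   A basic neighbourhood of g is given by finitely many signed measures
   nu_0,...,nu_{n-1} and eps > 0. *)
Definition Mclosed (Gam : set (X -> R)) :=
  forall g, Cb X g ->
    (forall (n : nat) (mp mn : nat -> {finite_measure set (borel X) -> \bar R})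
            (eps : R), 0 < eps ->
       exists2 g', Gam g' &
         forall i, (i < n)%N -> `|sint (mp i) (mn i) g - sint (mp i) (mn i) g'| < eps) ->
    Gam g.

Definition convex_fset (Gam : set (X -> R)) :=
  forall f g (t : R), Gam f -> Gam g -> 0 <= t <= 1 ->
    Gam (fun x => t * f x + (1 - t) * g x).

Definition admissible (Gam : set (X -> R)) :=
  [/\ Gam (fun _ => 0), convex_fset Gam & Mclosed Gam].

Definition determining (Q : set (probability (borel X) R)) (Psi : set (X -> R)) :=
  forall P1 P2, Q P1 -> Q P2 ->
    (forall psi, Psi psi ->
       (\int[P1]_x (psi x)%:E = \int[P2]_x (psi x)%:E)%E) ->
    forall A : set (borel X), measurable A -> P1 A = P2 A.

Definition bracket (Gam : set (X -> R)) (psi : X -> R) :=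
  exists (c : R) (eps : R), 0 < eps /\
    Gam (fun x => c + eps * psi x) /\ Gam (fun x => c - eps * psi x).

Definition strictly_admissible (Gam : set (X -> R)) :=
  admissible Gam /\
  exists Psi : set (X -> R), [/\ Psi `<=` Cb X, determining setT Psi &
    forall psi, Psi psi -> bracket Gam psi].

Variables (S : Type) (T : S -> X -> X).

Definition inv_part (Gam : set (X -> R)) : set (X -> R) :=
  [set g | Gam g /\ forall s, g \o T s = g].

Definition inv_prob : set (probability (borel X) R) :=
  [set P | forall s (A : set (borel X)), measurable A -> P (T s @^-1` A) = P A].

Definition Sigma_strictly_admissible (Gam : set (X -> R)) :=
  [/\ admissible Gam, (forall g, Gam g -> forall s, g \o T s = g) &
    exists Psi : set (X -> R), [/\ Psi `<=` Cb X, determining inv_prob Psi &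
      forall psi, Psi psi -> bracket Gam psi]].

End OnX.

Definition is_group {S : Type} (mul : S -> S -> S) (inv : S -> S) (e : S) :=
  [/\ (forall x y z, mul x (mul y z) = mul (mul x y) z),
      (forall x, mul e x = x), (forall x, mul x e = x),
      (forall x, mul (inv x) x = e) & (forall x, mul x (inv x) = e)].

Definition compact_hausdorff_group (S : ptopologicalType)
    (mul : S -> S -> S) (inv : S -> S) (e : S) :=
  [/\ is_group mul inv e, continuous (fun p : S * S => mul p.1 p.2),
      continuous inv, compact [set: S] & hausdorff_space S].

Definition haar_probability (S : ptopologicalType) (mul : S -> S -> S)
    (mu : probability (borel S) R) :=
  forall (s : S) (A : set (borel S)), measurable A ->
    mu [set t | A (mul s t)] = mu A /\ mu [set t | A (mul t s)] = mu A.

Definition measurable_action (S X : ptopologicalType) (mul : S -> S -> S) (e : S)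
    (T : S -> X -> X) :=
  [/\ (forall x, T e x = x), (forall s t x, T (mul s t) x = T s (T t x)) &
      measurable_fun [set: borel S * borel X]
        (fun p : borel S * borel X => (T p.1 p.2 : borel X))].

Definition S_avg (S X : ptopologicalType) (mu : probability (borel S) R)
    (T : S -> X -> X) (g : X -> R) : X -> R :=
  fun x => fine (\int[mu]_s (g (T s x))%:E)%E.

End Defs.
Arguments Cb {R} X.

(* Main.v *)
Require Import Defs.
From HB Require Import structures.
From mathcomp Require Import all_boot all_order all_algebra.
From mathcomp Require Import all_classical all_reals all_analysis.
From mathcomp Require Import measurable_realfun.
Import Order.TTheory GRing.Theory Num.Theory.
Local Open Scope classical_set_scope.
Local Open Scope ring_scope.

Section H.
Context {R : realType}.

Lemma cont_meas0 (X : ptopologicalType) (g : X -> R) :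
  Cb X g -> measurable_fun [set: borel X] (g : borel X -> R).
Proof.
move=> [/continuousP cg _]; apply: (measurability _ (RGenOpens.measurableE R)).
move=> _ [_ [a [b ->] <-]]; rewrite setTI.
apply: sub_sigma_algebra; apply: cg; exact: interval_open.
Qed.

Lemma sint_dirac (X : ptopologicalType) (a b : X) (g : X -> R) :
  Cb X g ->
  sint (\d_(a : borel X) : {finite_measure set (borel X) -> \bar R}) \d_(b : borel X) g = g a - g b.
Proof.
move=> cg; have mg : measurable_fun [set: borel X] (fun x => (g x)%:E).
  by apply/measurable_EFinP; exact: cont_meas0.
by rewrite /sint !(integral_dirac _ measurableT mg) /= !indicE !in_setT !mul1r.
Qed.
Lemma Cb_affine (Y : topologicalType) (G : Y -> R) (a c : R) :
  Cb Y G -> Cb Y (fun x => a * (G x - c)).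
Proof.
move=> [cG [M hM]]; split.
  move=> x.
  have h2 := @continuousB R R^o Y G (cst c) x (cG x) (@cst_continuous Y R^o c x).
  have h1 := @cst_continuous Y R^o a x.
  exact: (@continuousM R Y (cst a) (fun y => G y - c) x h1 h2).
exists (`|a| * (M + `|c|)) => x; rewrite normrM ler_wpM2l //.
by apply: le_trans (ler_normB _ _) _; rewrite lerD2r hM.
Qed.
End H.
Section P1.
Context {R : realType}.
Lemma part1 (X : ptopologicalType) (S : Type) (T : S -> X -> X) (Gam : set (X -> R)) :
  Gam `<=` Cb X -> admissible Gam -> admissible (inv_part T Gam).
Proof.
move=> GC [G0 Gcv Gcl]; split.
- by split.
- move=> f g t [Gf If] [Gg Ig] t01; split; first exact: Gcv.
  move=> s; apply/funext => x /=.
  by rewrite -[f (T s x)]/((f \o T s) x) -[g (T s x)]/((g \o T s) x) If Ig.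
- move=> g Cg H; split.
    apply: Gcl => // n mp mn eps e0.
    by have [g' [Gg' _] ?] := H n mp mn eps e0; exists g'.
  move=> s; apply/funext => x /=.
  apply/eqP; rewrite -subr_eq0; apply/negPn/negP => hne.
  have e0 : 0 < `|g (T s x) - g x| by rewrite normr_gt0.
  have [g' [Gg' Ig'] Hi] := H 1%N (fun _ => (\d_(T s x : borel X) : {finite_measure set (borel X) -> \bar R}))
     (fun _ => (\d_(x : borel X) : {finite_measure set (borel X) -> \bar R})) _ e0.
  have := Hi 0%N isT; rewrite !sint_dirac //; last exact: GC.
  have -> : g' (T s x) = g' x by rewrite -[g' (T s x)]/((g' \o T s) x) Ig'.
  by rewrite subrr subr0 ltxx.
Qed.
End P1.
Section P2.
Context {R : realType} (S X : ptopologicalType) (mul : S -> S -> S) (e : S)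
  (mu : probability (borel S) R) (T : S -> X -> X).
Hypothesis hact : measurable_action mul e T.

Lemma cont_meas {g : X -> R} :
  Cb X g -> measurable_fun [set: borel X] (g : borel X -> R).
Proof.
move=> [/continuousP cg _]; apply: (measurability _ (RGenOpens.measurableE R)).
move=> _ [_ [a [b ->] <-]]; rewrite setTI.
apply: sub_sigma_algebra; apply: cg; exact: interval_open.
Qed.

Lemma Cb_bound (g : X -> R) : Cb X g -> forall (A : set X), [bounded g x | x in A].
Proof.
move=> [_ [M hM]] A; exists M; split; first by rewrite num_real.
by move=> N MN x _; apply: le_trans (hM x) (ltW MN).
Qed.

Lemma measT1 x : measurable_fun [set: borel S] (fun s => (T s x : borel X)).
Proof.
case: hact => _ _ mT.
exact: (measurable_fun_pair1 (f := fun p : borel S * borel X => (T p.1 p.2 : borel X)) x mT).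
Qed.

Lemma measT2 s : measurable_fun [set: borel X] (fun x => (T s x : borel X)).
Proof.
case: hact => _ _ mT.
exact: (measurable_fun_pair2 (f := fun p : borel S * borel X => (T p.1 p.2 : borel X)) s mT).
Qed.

Lemma mu1 : mu [set: borel S] = 1%E.
Proof. exact: probability_setT. Qed.

Lemma int1 (g : X -> R) x : Cb X g ->
  mu.-integrable [set: borel S] (EFin \o (fun s => g (T s x))).
Proof.
move=> Cg; apply: measurable_bounded_integrable => //.
- by apply: (le_lt_trans (probability_le1 _ measurableT)); rewrite ltry.
- exact: (measurableT_comp (cont_meas Cg) (measT1 x)).
- case: Cg => _ [M hM]; exists M; split; first by rewrite num_real.
  by move=> N MN y _; apply: le_trans (hM _) (ltW MN).
Qed.

Lemma S_avg_lin (g : X -> R) (c a : R) : Cb X g ->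
  S_avg mu T (fun x => c + a * g x) = fun x => c + a * S_avg mu T g x.
Proof.
move=> Cg; apply/funext => x.
rewrite /S_avg.
change (\int[mu]_(s in setT) (c + a * g (T s x)) = c + a * \int[mu]_(s in setT) g (T s x)).
rewrite RintegralD //; last first.
  exact: (integrableZl measurableT a (int1 g x Cg)).
  exact: finite_measure_integrable_cst.
rewrite RintegralZl //; last exact: (int1 g x Cg). rewrite Rintegral_cst //.
by rewrite [X in fine X](_ : _ = 1%E) ?mulr1 //; exact: probability_setT.
Qed.

Lemma cont_meas_gen (A B : ptopologicalType) (f : A -> B) :
  continuous f -> measurable_fun [set: borel A] (f : borel A -> borel B).
Proof.
move=> /continuousP cf; apply: (@measurability _ _ (borel A) (borel B) setT f open) => //.
move=> _ [U oU <-]; rewrite setTI.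
by apply: sub_sigma_algebra; apply: cf.
Qed.

Hypothesis hcont : continuous (fun p : S * S => mul p.1 p.2).
Hypothesis hhaar : haar_probability mul mu.

Lemma mulr_cont t : continuous (fun s => mul s t).
Proof.
move=> s; apply: (continuous_comp (f := fun s => (s, t)) (g := fun p : S * S => mul p.1 p.2)); last exact: hcont.
by apply: cvg_pair; [exact: cvg_id | exact: cvg_cst].
Qed.

Lemma S_inv (g : X -> R) t x : Cb X g -> S_avg mu T g (T t x) = S_avg mu T g x.
Proof.
move=> Cg; rewrite /S_avg; congr fine.
have mphi : measurable_fun [set: borel S] (fun s => mul s t : borel S).
  exact: cont_meas_gen (mulr_cont t).
pose h := fun u : borel S => (g (T u x))%:E.
have mh : measurable_fun [set: borel S] h.
  by apply/measurable_EFinP; exact: (measurableT_comp (cont_meas Cg) (measT1 x)).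
have intf : mu.-integrable ((fun s => mul s t) @^-1` setT) (h \o (fun s => mul s t)).
  rewrite preimage_setT.
  have := int1 g (T t x) Cg; apply: eq_integrable => // s _.
  by case: hact => _ hm _; rewrite /h /= hm.
have E1 := integral_pushforward mphi mh intf measurableT.
rewrite preimage_setT in E1.
transitivity (\int[mu]_(s in setT) (h \o (fun s => mul s t)) s)%E.
  by apply: eq_integral => s _; case: hact => _ hm _; rewrite /h /= hm.
rewrite -E1; apply: eq_measure_integral => A mA _.
exact: (hhaar t A mA).2.
Qed.

Lemma intQ d (Y : measurableType d) (Q : probability Y R) (h : Y -> R) (M : R) :
  measurable_fun setT h -> (forall y, `|h y| <= M) -> Q.-integrable setT (EFin \o h).
Proof.
move=> mh hM; apply: measurable_bounded_integrable => //.
- by apply: (le_lt_trans (probability_le1 _ measurableT)); rewrite ltry.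
- exists M; split; first by rewrite num_real.
  by move=> N MN y _; apply: le_trans (hM _) (ltW MN).
Qed.

Lemma int_S (g : X -> R) (P : probability (borel X) R) : Cb X g -> inv_prob T P ->
  (\int[P]_x (S_avg mu T g x)%:E = \int[P]_x (g x)%:E)%E.
Proof.
move=> Cg hP; have [_ [M hM]] := Cg.
case: hact => _ _ mT.
pose f := fun z : borel S * borel X => (g (T z.1 z.2))%:E.
have intf : (mu \x P)%E.-integrable setT f.
  apply: (@intQ _ _ _ (fun z : borel S * borel X => g (T z.1 z.2)) M) => //.
  exact: (measurableT_comp (cont_meas Cg) mT).
have FF := Fubini intf.
transitivity (\int[P]_x \int[mu]_s f (s, x))%E.
  apply: eq_integral => x _; rewrite /S_avg fineK //.
  exact: (integrable_fin_num measurableT (int1 g x Cg)).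
rewrite -FF.
transitivity (\int[mu]_s (cst (\int[P]_x (g x)%:E) s))%E; last first.
  rewrite integral_cst //.
  by rewrite [X in (_ * X)%E](_ : _ = 1%E) ?mule1 //; exact: probability_setT.
apply: eq_integral => s _ /=.
have mg : measurable_fun [set: borel X] (EFin \o g).
  by apply/measurable_EFinP; exact: cont_meas.
have intg : P.-integrable (T s @^-1` setT) ((EFin \o g) \o T s).
  rewrite preimage_setT.
  suff h : P.-integrable setT (EFin \o (fun x => g (T s x))) by exact: h.
  apply: (@intQ _ (borel X) P (fun x : borel X => g (T s x)) M) => //.
  exact: (measurableT_comp (cont_meas Cg) (measT2 s)).
have E1 := integral_pushforward (measT2 s) mg intg measurableT.
rewrite preimage_setT in E1.
rewrite /f /=; rewrite -[LHS]/(\int[P]_(x in setT) ((EFin \o g) \o T s) x)%E.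
rewrite -E1; apply: eq_measure_integral => [|mph A mA _]; first exact: measT2.
exact: (hP s A mA).
Qed.

End P2.

Theorem lemma4 (R : realType) (X : completePseudoMetricType R)
  (S : ptopologicalType) (mul : S -> S -> S) (inv : S -> S) (e : S)
  (mu : probability (borel S) R) (T : S -> X -> X) (Gam : set (X -> R)) :
  hausdorff_space X -> separable_space X ->
  compact_hausdorff_group mul inv e -> haar_probability mul mu ->
  measurable_action mul e T ->
  Gam `<=` Cb X ->
  (admissible Gam -> admissible (inv_part T Gam)) /\
  (strictly_admissible Gam ->
   (forall g, Gam g -> Gam (S_avg mu T g)) ->
   Sigma_strictly_admissible T (inv_part T Gam)).
Proof.
move=> _ _ [_ hcont _ _ _] hhaar hact GC; split; first exact: part1.
move=> [adm [Psi [PsiC Pdet Pbr]]] hS.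
have lin := @S_avg_lin R S X mul e mu T hact.
have Sinv := @S_inv _ _ _ _ _ _ _ hact hcont hhaar.
split.
- exact: part1.
- by move=> g [_ Ig].
exists [set S_avg mu T psi | psi in Psi]; split.
- move=> _ [psi Ppsi <-].
  have [c [eps [e0 [G1 G2]]]] := Pbr psi Ppsi.
  have Cpsi := PsiC psi Ppsi.
  have := GC _ (hS _ G1); rewrite lin // => /(@Cb_affine _ _ _ eps^-1 c).
  congr (Cb X _); apply/funext => x.
  rewrite addrC addKr mulrA mulVf ?mul1r //; exact: lt0r_neq0.
- move=> P1 P2 hP1 hP2 heq; apply: Pdet => // psi Ppsi.
  have Cpsi := PsiC psi Ppsi.
  rewrite -(@int_S R S X mul e mu T hact _ _ Cpsi hP1) -(@int_S R S X mul e mu T hact _ _ Cpsi hP2).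
  by apply: heq; exists psi.
- move=> _ [psi Ppsi <-].
  have [c [eps [e0 [G1 G2]]]] := Pbr psi Ppsi.
  have Cpsi := PsiC psi Ppsi.
  have E : (fun x => c - eps * S_avg mu T psi x) = S_avg mu T (fun x => c + (- eps) * psi x).
    by rewrite lin //; apply/funext => x; rewrite mulNr.
  have G2' : Gam (fun x => c + (- eps) * psi x).
    by rewrite (_ : (fun x => _) = (fun x => c - eps * psi x)) //; apply/funext => x; rewrite mulNr.
  exists c, eps; split; first exact: e0.
  split; split.
  + by have := hS _ G1; rewrite lin.
  + by move=> s; apply/funext => x /=; rewrite Sinv.
  + by rewrite E; apply: hS.
  + by move=> s; apply/funext => x /=; rewrite Sinv.
Qed.
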